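(* Let $d\ge2$. Then for every $G\in C^2(\mathbb{R})$ there is a separately convex function $F:\mathbb{R}^d\to\mathbb{R}$ such that $F(t,t,\dots,t)=G(t)$ for each $t\in\mathbb{R}$.
   Context: A function $F:\mathbb{R}^d\to\mathbb{R}$ is called separately convex if it is convex on every line parallel to a coordinate axis. *)

(* Defs.v *)
From HB Require Import structures.
From mathcomp Require Import all_boot all_order all_algebra.
From mathcomp Require Import all_classical all_reals topology normedtype derive.
Set Implicit Arguments. Unset Strict Implicit. Unset Printing Implicit Defensive.
Import Order.TTheory GRing.Theory Num.Theory.
Import numFieldNormedType.Exports.
Local Open Scope ring_scope.

Definition convex_on_R (R : realType) (f : R -> R) : Prop :=
  forall (a b l : R), 0 <= l -> l <= 1 ->
    f (l * a + (1 - l) * b) <= l * f a + (1 - l) * f b.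

Definition separately_convex (R : realType) (d : nat)
    (F : ('I_d -> R) -> R) : Prop :=
  forall (x : 'I_d -> R) (i : 'I_d),
    convex_on_R (fun s : R => F (fun j => if j == i then s else x j)).

Definition C2 (R : realType) (G : R -> R) : Prop :=
  (forall x : R, derivable G x 1) /\
  (forall x : R, derivable (derive1 G) x 1) /\
  continuous (derive1 (derive1 G)).

(* Main.v *)
Require Import Defs.
From HB Require Import structures.
From mathcomp Require Import all_boot all_order all_algebra.
From mathcomp Require Import all_classical all_reals topology normedtype derive realfun convex.
Import Order.TTheory GRing.Theory Num.Theory.
Import numFieldNormedType.Exports.
Local Open Scope ring_scope.
Local Open Scope classical_set_scope.
From mathcomp Require Import lra ring.

Section P.
Variable R : realType.
Definition pp (w : R) : R := Num.max w 0.
Definition p0 (w : R) : R := pp w ^+ 3.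
Definition p1 (w : R) : R := 3 * pp w ^+ 2.
Definition p2 (w : R) : R := 6 * pp w.

Lemma pp_cont : continuous pp.
Proof.
move=> x; apply: (@continuous_max _ _ id (cst 0)); [exact: cvg_id| exact: cvg_cst].
Qed.

Lemma quot_p0 (h : R) : h != 0 -> h^-1 * p0 h = pp h ^+ 2.
Proof.
rewrite /p0 /pp => h0; have [hp|hn] := leP h 0.
  by rewrite expr0n /= mulr0 expr0n.
by rewrite exprS mulKf.
Qed.

Lemma is_derive_quot (f : R -> R) x l :
  (fun h => h^-1 *: ((f \o shift x) (h *: 1) - f x)) @ 0^' --> l -> is_derive x 1 f l.
Proof. move=> H; apply: DeriveDef; [exact: cvgP H | exact: cvg_lim H]. Qed.

Lemma is_derive_p0 (w : R) : is_derive w 1 p0 (p1 w).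
Proof.
have [wn|wp|->] := ltgtP w 0.
- apply: (@near_eq_is_derive _ _ _ (cst 0)).
    near=> x. rewrite /p0 /pp max_r ?expr0n //. apply: ltW. near: x. exact: lt_nbhsl.
  apply: is_derive_eq. by rewrite /p1 /pp max_r ?ltW // expr0n /= mulr0.
- have hd : is_derive w 1 ((@id R) ^+ 3) (3 * w ^+ 2).
    apply: is_derive_eq. by rewrite /GRing.scale /= mulr1.
  apply: (is_derive_eq (f' := 3 * w ^+ 2)); last first.
    by rewrite /p1 /pp max_l // ltW.
  apply: (near_eq_is_derive _ hd) => /=.
  near=> x. rewrite /p0 /pp max_l //. apply: ltW. near: x. exact: lt_nbhsr.
- apply: is_derive_quot.
  have -> : p1 0 = 0 by rewrite /p1 /pp maxxx expr0n /= mulr0.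
  have H : (fun h => pp h * pp h) @ 0^' --> (0:R).
    have e : pp 0 * pp 0 = 0 by rewrite /pp maxxx mulr0.
    rewrite -[X in _ --> X]e.
    apply: cvg_within_filter. apply: cvgM; exact: pp_cont.
  apply: cvg_trans H. apply: near_eq_cvg.
  near=> h. rewrite /= addr0 [p0 0]/p0 /pp maxxx expr0n /= subr0 -/(pp h).
  rewrite /GRing.scale /= mulr1 quot_p0 ?expr2 //. near: h. exact: nbhs_dnbhs_neq.
Unshelve. all: by end_near.
Qed.

Lemma quot_p1 (h : R) : h != 0 -> h^-1 * p1 h = 3 * pp h.
Proof.
rewrite /p1 /pp => h0; have [hp|hn] := leP h 0.
  by rewrite expr0n /= !mulr0.
by rewrite mulrCA expr2 mulKf.
Qed.

Lemma is_derive_p1 (w : R) : is_derive w 1 p1 (p2 w).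
Proof.
have [wn|wp|->] := ltgtP w 0.
- apply: (@near_eq_is_derive _ _ _ (cst 0)).
    near=> x. rewrite /p1 /pp max_r ?expr0n ?mulr0 //. apply: ltW. near: x. exact: lt_nbhsl.
  apply: is_derive_eq. by rewrite /p2 /pp max_r ?ltW // mulr0.
- have hd : is_derive w 1 (cst 3 * (@id R) ^+ 2) (6 * w).
    apply: is_derive_eq. rewrite /GRing.scale /= mulr1 mulr0 addr0 expr1 mulrA. congr (_ * _). by rewrite -natrM.
  apply: (is_derive_eq (f' := 6 * w)); last first.
    by rewrite /p2 /pp max_l // ltW.
  apply: (near_eq_is_derive _ hd) => /=.
  near=> x. rewrite /p1 /pp max_l //. apply: ltW. near: x. exact: lt_nbhsr.
- apply: is_derive_quot.
  have -> : p2 0 = 0 by rewrite /p2 /pp maxxx mulr0.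
  have H : (fun h => 3 * pp h) @ 0^' --> (0:R).
    have e : 3 * pp 0 = 0 by rewrite /pp maxxx mulr0.
    rewrite -[X in _ --> X]e.
    apply: cvg_within_filter. apply: cvgM; [exact: cvg_cst| exact: pp_cont].
  apply: cvg_trans H. apply: near_eq_cvg.
  near=> h. rewrite /= addr0 [p1 0]/p1 /pp maxxx expr0n /= mulr0 subr0 -/(pp h).
  rewrite /GRing.scale /= mulr1 quot_p1 //. near: h. exact: nbhs_dnbhs_neq.
Unshelve. all: by end_near.
Qed.

Lemma conv2 (f f1 f2 : R -> R) (a b l : R) :
  (forall x : R, is_derive x 1 f (f1 x)) -> (forall x : R, is_derive x 1 f1 (f2 x)) ->
  (forall x, a <= x <= b -> 0 <= f2 x) -> a <= b -> 0 <= l -> l <= 1 ->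
  f (l * a + (1 - l) * b) <= l * f a + (1 - l) * f b.
Proof.
move=> H1 H2 H3 ab l0 l1.
have D1 : 'D_1 f = f1 by apply/funext => x; rewrite derive_val.
have cf : continuous f.
  move=> x; apply/differentiable_continuous/derivable1_diffP.
  by have [] := H1 x.
have := @second_derivative_convex R f a b _ _ _ _ _ (interval_inference.Itv01 l0 l1) ab.
rewrite !convRE /=. apply.
- move=> x /andP[ax xb]; rewrite D1 derive_val; apply: H3.
  by rewrite !ltW.
- exact/cvg_at_left_filter/cf.
- exact/cvg_at_right_filter/cf.
- by move=> x _; have [] := H1 x.
- by move=> x _; rewrite D1; have [] := H2 x.
Qed.

Lemma pp_ge0 w : 0 <= pp w. Proof. by rewrite /pp le_max lexx orbT. Qed.
Lemma pp_le0 w : w <= 0 -> pp w = 0. Proof. by move=> h; rewrite /pp max_r. Qed.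
Lemma pp_ge0' w : 0 <= w -> pp w = w. Proof. by move=> h; rewrite /pp max_l. Qed.
Lemma p0_ge0 w : 0 <= p0 w. Proof. by rewrite /p0 exprn_ge0 // pp_ge0. Qed.
Lemma p2_ge0 w : 0 <= p2 w. Proof. by rewrite /p2 mulr_ge0 // pp_ge0. Qed.

Lemma piece_ineq w v : 0 <= p2 w * v ^+ 2 + 4 * p1 w * v + 2 * p0 (w - v).
Proof.
rewrite /p0 /p1 /p2.
have [wn|wp] := leP w 0.
  rewrite pp_le0 // !expr0n /= !mulr0 !mul0r !add0r.
  by rewrite mulr_ge0 // exprn_ge0 // pp_ge0.
rewrite (pp_ge0' _ (ltW wp)).
have [h|h] := leP (w - v) 0.
  rewrite pp_le0 // expr0n /= mulr0 addr0.
  have hv : 0 < v by lra.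
  have h1 : 0 < w * v by rewrite mulr_gt0.
  have h2 : 0 < w * v * v by rewrite mulr_gt0.
  have h3 : 0 < w * v * w by rewrite mulr_gt0.
  rewrite !expr2. nra.
rewrite (pp_ge0' _ (ltW h)).
have [hv|hv] := leP 0 v.
  have h1 : 0 <= w * v by rewrite mulr_ge0 // ltW.
  have h2 : 0 <= (w - v) ^+ 3 by rewrite exprn_ge0 // ltW.
  have h3 : 0 <= w * v * v by rewrite mulr_ge0.
  have h4 : 0 <= w * w * v by rewrite mulr_ge0 // mulr_ge0 // ltW.
  rewrite !expr2. nra.
set t := - v.
have ht : 0 < t by rewrite /t oppr_gt0.
have -> : v = - t by rewrite /t opprK.
have h1 : 0 < w * t by rewrite mulr_gt0.
have h5 : 0 <= (2 * w - t) ^+ 2 by rewrite exprn_even_ge0.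
have h6 : 0 <= w * (2 * w - t) ^+ 2 by rewrite mulr_ge0 // ltW.
have h7 : 0 < w * t * t by rewrite mulr_gt0.
have h8 : 0 < t * t * t by rewrite !mulr_gt0.
rewrite !exprSr !expr0 !mul1r in h5 h6 *. nra.
Qed.

Definition piece (k s : R) := p0 (s - k) + p0 (- s - k).
Definition piece1 (k s : R) := p1 (s - k) - p1 (- s - k).
Definition piece2 (k s : R) := p2 (s - k) + p2 (- s - k).

Lemma is_derive_lin (f f1 : R -> R) (al be : R) (s : R) :
  (forall w : R, is_derive w 1 f (f1 w)) ->
  is_derive s 1 (fun x => f (al * x + be)) (f1 (al * s + be) * al).
Proof.
move=> H.
have hg : is_derive s 1 (fun x : R => al * x + be) al.
  have e : (fun x : R => al * x + be) = (al \*: (@id R)) + cst be.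
    by apply/funext => x.
  rewrite e. apply: is_derive_eq. by rewrite /GRing.scale /= mulr1 addr0.
exact: (@is_derive1_comp R f (fun x => al * x + be) s _ _ (H _) hg).
Qed.

Lemma is_derive_piece (k s : R) : is_derive s 1 (piece k) (piece1 k s).
Proof.
have -> : piece k = (fun x => p0 (1 * x + - k)) + (fun x => p0 ((-1) * x + - k)).
  by apply/funext => x; rewrite /piece fctE mul1r mulN1r.
apply: is_derive_eq.
  apply: is_deriveD; apply: is_derive_lin; exact: is_derive_p0.
by rewrite /piece1 mul1r mulN1r mulr1 mulrN1.
Qed.

Lemma is_derive_piece1 (k s : R) : is_derive s 1 (piece1 k) (piece2 k s).
Proof.
have -> : piece1 k = (fun x => p1 (1 * x + - k)) - (fun x => p1 ((-1) * x + - k)).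
  by apply/funext => x; rewrite /piece1 !fctE mul1r mulN1r.
apply: is_derive_eq.
  apply: is_deriveB; apply: is_derive_lin; exact: is_derive_p1.
by rewrite /piece2 mul1r mulN1r mulr1 mulrN1 opprK.
Qed.

Section AN.
Variables (a : nat -> R) (C : R).
Fixpoint AN (N : nat) (s : R) : R :=
  match N with 0 => C | N'.+1 => AN N' s + a N' * piece N'%:R s end.
Fixpoint AN1 (N : nat) (s : R) : R :=
  match N with 0 => 0 | N'.+1 => AN1 N' s + a N' * piece1 N'%:R s end.
Fixpoint AN2 (N : nat) (s : R) : R :=
  match N with 0 => 0 | N'.+1 => AN2 N' s + a N' * piece2 N'%:R s end.

Lemma is_derive_AN N (s : R) : is_derive s 1 (AN N) (AN1 N s).
Proof.
elim: N s => [|N IH] s.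
  exact: is_derive_cst.
have -> : AN N.+1 = AN N + (a N \*: piece N%:R) by [].
exact: (is_derive_eq (is_deriveD (IH s) (is_deriveZ (a N) (is_derive_piece N%:R s)))).

Qed.

Lemma is_derive_AN1 N (s : R) : is_derive s 1 (AN1 N) (AN2 N s).
Proof.
elim: N s => [|N IH] s.
  exact: is_derive_cst.
have -> : AN1 N.+1 = AN1 N + (a N \*: piece1 N%:R) by [].
exact: (is_derive_eq (is_deriveD (IH s) (is_deriveZ (a N) (is_derive_piece1 N%:R s)))).

Qed.

Hypothesis a_ge0 : forall n, 0 <= a n.
Hypothesis C_ge0 : 0 <= C.

Lemma piece_ge0 k s : 0 <= piece k s.
Proof. by rewrite /piece addr_ge0 // p0_ge0. Qed.

Lemma AN_geC N s : C <= AN N s.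
Proof.
elim: N => //= N IH. by rewrite (le_trans IH) // lerDl mulr_ge0 // piece_ge0.
Qed.

Lemma AN_ge_term N m s : (m < N)%N -> a m * piece m%:R s <= AN N s.
Proof.
elim: N => // N IH; rewrite ltnS leq_eqVlt => /orP[/eqP->|hm] /=.
  by rewrite lerDr (le_trans C_ge0) // AN_geC.
by rewrite (le_trans (IH hm)) // lerDl mulr_ge0 // piece_ge0.
Qed.

Lemma piece_quad k s c :
  2 * piece k s <= piece2 k s * (s - c) ^+ 2 + 4 * piece1 k s * (s - c)
    + 2 * piece k s + 2 * piece k c.
Proof.
have h1 := piece_ineq (s - k) (s - c).
have h2 := piece_ineq (- s - k) (- (s - c)).
have e1 : s - k - (s - c) = c - k by ring.
have e2 : - s - k - - (s - c) = - c - k by ring.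
rewrite e1 in h1; rewrite e2 sqrrN in h2.
rewrite /piece /piece1 /piece2. nra.
Qed.

Lemma AN_quad N s c :
  2 * AN N s <= AN2 N s * (s - c) ^+ 2 + 4 * AN1 N s * (s - c)
    + 2 * AN N s + 2 * AN N c.
Proof.
elim: N => /= [|N IH]; first by have := C_ge0; nra.
have h := piece_quad N%:R s c.
have ha := a_ge0 N.
have hh : 0 <= a N * (piece2 N%:R s * (s - c) ^+ 2 + 4 * piece1 N%:R s * (s - c)
    + 2 * piece N%:R c).
  by apply: mulr_ge0 => //; lra.
nra.
Qed.

Lemma piece_zero (k s : R) : `|s| <= k -> piece k s = 0.
Proof.
move=> h; rewrite /piece /p0 !pp_le0 ?expr0n ?addr0 //.
- have := ler_normr s; move: h; rewrite -!/(Num.norm _). 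
  case: (lerP 0 s) => hs; [rewrite ger0_norm // | rewrite ltr0_norm //]; lra.
- case: (lerP 0 s) => hs; move: h; [rewrite ger0_norm // | rewrite ltr0_norm //]; lra.
Qed.

Lemma AN_stable N M s : `|s| <= N%:R -> (N <= M)%N -> AN M s = AN N s.
Proof.
move=> hs; elim: M => [|M IH]; first by rewrite leqn0 => /eqP->.
rewrite leq_eqVlt => /orP[/eqP<-//|]; rewrite ltnS => hNM /=.
rewrite IH // piece_zero ?mulr0 ?addr0 //.
by rewrite (le_trans hs) // ler_nat.
Qed.

Definition Aof (s : R) := AN (Num.trunc `|s|).+1 s.

Lemma Aof_eq N s : `|s| <= N%:R -> Aof s = AN N s.
Proof.
move=> hs; rewrite /Aof.
have h0 : `|s| <= (Num.trunc `|s|).+1%:R by apply/ltW/truncnS_gt.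
have [hle|hlt] := leqP N (Num.trunc `|s|).+1.
  by rewrite (@AN_stable N _ s hs hle).
by rewrite (@AN_stable _ N s h0 (ltnW hlt)).
Qed.
End AN.

Lemma piece_ge1 (k s : R) : k + 1 <= `|s| -> 1 <= piece k s.
Proof.
move=> h; rewrite /piece /p0.
have hp0 := pp_ge0 (s - k); have hp1 := pp_ge0 (- s - k).
case: (lerP 0 s) => hs; move: h; [rewrite ger0_norm // | rewrite ltr0_norm //] => h.
- rewrite (pp_ge0' (s - k)); last lra.
  have h1 : 1 <= (s - k) ^+ 3 by rewrite exprn_ege1 //; lra.
  have := exprn_ge0 3 hp1; lra.
- rewrite (pp_ge0' (- s - k)); last lra.
  have h1 : 1 <= (- s - k) ^+ 3 by rewrite exprn_ege1 //; lra.
  have := exprn_ge0 3 hp0; lra.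
Qed.

Lemma Aof_maj (Mb : nat -> R) (kap : R -> R) :
  (forall n, 0 <= Mb n) -> (forall n s, `|s| <= n%:R -> kap s <= Mb n) ->
  forall s, kap s <= Aof (fun n => Mb n.+2) (Mb 1) s.
Proof.
move=> M0 HM s; rewrite /Aof.
have a0 : forall n, 0 <= Mb n.+2 by [].
case eT: (Num.trunc `|s|) => [|m].
  apply: (le_trans _ (@AN_geC _ (Mb 1) a0 _ _)).
  apply: HM; apply: ltW; rewrite -truncn_le_nat eT //.
have hm : (m%:R + 1 <= `|s|).
  have : (m < Num.trunc `|s|)%N by rewrite eT.
  by rewrite truncn_gt_nat -natr1.
apply: (le_trans _ (@AN_ge_term _ _ a0 (M0 1) _ m s (ltnW (ltnSn m.+1)))).
have hk : kap s <= Mb m.+2.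
  apply: HM; apply: ltW. have := truncnS_gt `|s|. by rewrite eT.
have := @piece_ge1 m%:R s hm. have := M0 m.+2. nra.
Qed.

Lemma dadd (u w : R -> R) (du dw : R) (s : R) :
  is_derive s 1 u du -> is_derive s 1 w dw -> is_derive s 1 (fun x => u x + w x) (du + dw).
Proof. move=> H1 H2; exact: (is_deriveD H1 H2). Qed.

Lemma dmul (u w : R -> R) (du dw : R) (s : R) :
  is_derive s 1 u du -> is_derive s 1 w dw ->
  is_derive s 1 (fun x => u x * w x) (du * w s + u s * dw).
Proof.
move=> H1 H2; have -> : (fun x => u x * w x) = (u * w)%R by apply/funext.
have h := is_deriveM H1 H2. apply: (is_derive_eq h).
rewrite /GRing.scale /=; ring.
Qed.

Arguments dadd {u w du dw s}.
Arguments dmul {u w du dw s}.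
Lemma dcst (k s : R) : is_derive s 1 (fun _ : R => k) 0.
Proof. exact: is_derive_cst. Qed.

Lemma did (s : R) : is_derive s 1 (fun x : R => x) 1.
Proof. exact: is_derive_id. Qed.

Lemma itv_norm (a b x : R) : a <= x <= b -> `|x| <= `|a| + `|b|.
Proof.
move=> /andP[ax xb].
have h1 := ler_norm b; have h2 := ler_norm (- a); rewrite normrN in h2.
have h3 := normr_ge0 a; have h4 := normr_ge0 b.
case: (lerP 0 x) => hx; [rewrite ger0_norm // | rewrite ltr0_norm //]; lra.
Qed.

Lemma line_convex (G : R -> R) (hG : C2 G) (a : nat -> R) (C : R)
  (ha : forall n, 0 <= a n) (hC : 0 <= C)
  (hmaj : forall s, `|derive1 (derive1 G) s| <= Aof a C s) (c : R) :
  convex_on_R (fun s => G s / 2 + G c / 2 + (Aof a C s + Aof a C c) * (s - c) ^+ 2).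
Proof.
have [hG1 [hG2 _]] := hG.
have dG : forall s : R, is_derive s 1 G (derive1 G s).
  by move=> s; rewrite derive1E; apply: derivableP; exact: hG1.
have dG1 : forall s : R, is_derive s 1 (derive1 G) (derive1 (derive1 G) s).
  by move=> s; rewrite [X in is_derive _ _ _ X]derive1E; apply: derivableP; exact: hG2.
move=> x y l l0 l1.
set N := (Num.trunc (`|x| + `|y| + `|c|)).+1.
have hN : `|x| + `|y| + `|c| <= N%:R by apply/ltW/truncnS_gt.
have hx0 := normr_ge0 x; have hy0 := normr_ge0 y; have hc0 := normr_ge0 c.
have eA : forall s, `|s| <= `|x| + `|y| -> Aof a C s = AN a C N s.
  move=> s hs; apply: Aof_eq; lra.
have eC : Aof a C c = AN a C N c by apply: Aof_eq; lra.
set K := AN a C N c.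
pose f := fun s => G s * 2^-1 + G c * 2^-1 + (AN a C N s + K) * ((s - c) * (s - c)).
pose f1 := fun s => derive1 G s * 2^-1 + 0 +
  (AN1 a N s * ((s - c) * (s - c)) + (AN a C N s + K) * (2 * (s - c))).
pose f2 := fun s => derive1 (derive1 G) s * 2^-1 +
  (AN2 a N s * ((s - c) * (s - c)) + AN1 a N s * (2 * (s - c)) +
  (AN1 a N s * (2 * (s - c)) + (AN a C N s + K) * 2)).
have Df : forall s : R, is_derive s 1 f (f1 s).
  move=> s.
  have dv : is_derive s 1 (fun x => x + - c) (1 + 0) := dadd (did s) (dcst (- c) s).
  have H := dadd (dadd (dmul (dG s) (dcst 2^-1 s)) (dcst (G c * 2^-1) s))
     (dmul (dadd (is_derive_AN a C N s) (dcst K s)) (dmul dv dv)).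
  apply: (is_derive_eq H); rewrite /f1; ring.
have Df1 : forall s : R, is_derive s 1 f1 (f2 s).
  move=> s.
  have dv : is_derive s 1 (fun x => x + - c) (1 + 0) := dadd (did s) (dcst (- c) s).
  have H := dadd (dadd (dmul (dG1 s) (dcst 2^-1 s)) (dcst 0 s))
     (dadd (dmul (is_derive_AN1 a N s) (dmul dv dv))
       (dmul (dadd (is_derive_AN a C N s) (dcst K s)) (dmul (dcst 2 s) dv))).
  apply: (is_derive_eq H); rewrite /f2; ring.
have ef : forall s, `|s| <= `|x| + `|y| ->
   G s / 2 + G c / 2 + (Aof a C s + Aof a C c) * (s - c) ^+ 2 = f s.
  move=> s hs; rewrite /f eA // eC expr2 //.
have hm : `|l * x + (1 - l) * y| <= `|x| + `|y|.
  apply: (le_trans (ler_normD _ _)). have el : `|1 - l| = 1 - l by rewrite ger0_norm //; lra.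
  rewrite !normrM (ger0_norm l0) el.
  have h1 : l * `|x| <= `|x| by rewrite ler_piMl.
  have h2 : (1 - l) * `|y| <= `|y| by rewrite ler_piMl //; lra.
  lra.
rewrite !ef //; try lra.
have H3 : forall u v, `|u| <= `|x| + `|y| -> `|v| <= `|x| + `|y| ->
    forall z, u <= z <= v -> 0 <= f2 z.
  move=> u v hu hv z /andP[uz zv].
  have hz : `|z| <= `|x| + `|y|.
    have h1 := ler_norm v; have h2 := ler_norm (- u); rewrite normrN in h2.
    case: (lerP 0 z) => hz; [rewrite ger0_norm // | rewrite ltr0_norm //]; lra.
  have hq := @AN_quad a C ha hC N z c.
  have hmz := hmaj z; rewrite (eA z hz) in hmz.
  have hg := ler_norm (- (derive1 (derive1 G) z)); rewrite normrN in hg.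
  have hn := normr_ge0 (derive1 (derive1 G) z).
  rewrite /f2 -/K expr2 in hq *. lra.
have [xy|yx] := leP x y.
  apply: (@conv2 f f1 f2 x y l Df Df1 _ xy l0 l1). apply: H3; lra.
have := @conv2 f f1 f2 y x (1 - l) Df Df1 (H3 y x ltac:(lra) ltac:(lra)) (ltW yx) ltac:(lra) ltac:(lra).
have -> : 1 - (1 - l) = l by ring.
have -> : (1 - l) * y + l * x = l * x + (1 - l) * y by ring.
lra.
Qed.
End P.


Lemma conv_ext (R : realType) (f g : R -> R) :
  (forall s, f s = g s) -> convex_on_R f -> convex_on_R g.
Proof. by move=> e; have -> : f = g by apply/funext. Qed.

Theorem lemma2p1 (R : realType) (d : nat) (hd : (2 <= d)%N)
    (G : R -> R) (hG : C2 G) :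
  exists F : ('I_d -> R) -> R,
    separately_convex F /\ (forall t : R, F (fun _ => t) = G t).
Proof.
pose kap := fun s : R => `|derive1 (derive1 G) s|.
have ckap : continuous kap.
  move=> x; apply: cvg_norm; exact: hG.2.2.
have hM : forall n : nat, exists M : R, 0 <= M /\
    (forall s : R, `|s| <= n%:R -> kap s <= M).
  move=> n.
  have nn : - n%:R <= (n%:R : R) by have := ler0n R n; lra.
  have [c _ hc] := EVT_max nn (continuous_subspaceT ckap).
  exists (kap c); split; first exact: normr_ge0.
  move=> s hs; apply: hc; rewrite in_itv /=.
  have := ler_norm s; have := ler_norm (- s); rewrite normrN => h1 h2.
  apply/andP; split; lra.
have [Mb HMb] := choice hM.
pose a := fun n => Mb n.+2.
pose C := Mb 1.
have ha : forall n, 0 <= a n by move=> n; exact: (HMb n.+2).1.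
have hC : 0 <= C by exact: (HMb 1).1.
have hmaj : forall s, `|derive1 (derive1 G) s| <= Aof R a C s.
  move=> s; apply: (@Aof_maj _ Mb kap) => [n|n t ht]; first exact: (HMb n).1.
  exact: (HMb n).2.
pose H := fun u v : R => G u / 2 + G v / 2 + (Aof R a C u + Aof R a C v) * (u - v) ^+ 2.
have d0 : (0 < d)%N by apply: leq_trans hd.
pose i0 : 'I_d := Ordinal d0.
pose i1 : 'I_d := Ordinal hd.
have i10 : (i1 == i0) = false by [].
exists (fun z => H (z i0) (z i1)); split; last first.
  by move=> t; rewrite /H subrr expr0n /= mulr0 addr0; field.
move=> z i.
have [ei0|ni0] := eqVneq i i0.
  apply: (@conv_ext R _ _ _ (@line_convex R G hG a C ha hC hmaj (z i1))) => s /=.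
  by rewrite ei0 i10.
have [ei1|ni1] := eqVneq i i1.
  apply: (@conv_ext R _ _ _ (@line_convex R G hG a C ha hC hmaj (z i0))) => s /=.
  rewrite /H. ring.
move=> x y l _ _ /=. lra.
Qed.
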